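(* Let $k\ge 2$ be an integer and $n\in\mathbb{Z}$. Then $L_k^{(n)}=Q_k^{n}L_k^{(0)}=L_k^{(0)}Q_k^{n}$.
   Context: Fix an integer $k\ge2$. The generalized Fibonacci sequence of order $k$, $(f_{k,n})_{n\in\mathbb Z}$, is the two-sided integer sequence with $f_{k,0}=f_{k,1}=\dots=f_{k,k-2}=0$, $f_{k,k-1}=1$, and $f_{k,n+k}=f_{k,n+k-1}+f_{k,n+k-2}+\dots+f_{k,n}$ for all $n\in\mathbb Z$. For $n\in\mathbb Z$, the generalized Fibonacci matrix $Q_k^n$ is the $k\times k$ matrix with entries $(Q_k^n)_{i,1}=f_{k,k+n-i}$ and $(Q_k^n)_{i,j}=\sum_{m=n-i+j-1}^{k+n-i-1} f_{k,m}$ for $2\le j\le k$, $1\le i\le k$. In particular $Q_k=Q_k^1$ is the matrix whose first row is all ones, with $(Q_k)_{i+1,i}=1$ for $1\le i\le k-1$ and all other entries $0$; it is known that $Q_k^n$ equals the $n$-th power of $Q_k$ for every $n\in\mathbb Z$ (with $Q_k^0=I_k$), and $\det Q_k^n=(-1)^{(k-1)n}$. The generalized Lucas sequence of order $k$, $(l_{k,n})_{n\in\mathbb Z}$, is the two-sided sequence satisfying $l_{k,n+k}=l_{k,n+k-1}+\dots+l_{k,n}$ for all $n\in\mathbb Z$ with initial values $l_{k,r}=\operatorname{trace}(Q_k^r)$ for $0\le r\le k-1$ (so $l_{k,0}=k$ and $l_{k,r}=2^r-1$ for $1\le r\le k-1$). For $n\in\mathbb Z$ the generalized Lucas matrix $L_k^{(n)}$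 is the $k\times k$ matrix with entries $(L_k^{(n)})_{i,1}=l_{k,k+n-i}$ and $(L_k^{(n)})_{i,j}=\sum_{m=n-i+j-1}^{k+n-i-1} l_{k,m}$ for $2\le j\le k$, $1\le i\le k$. *)

(* Defs.v *)
From mathcomp Require Import all_boot all_order all_algebra.
Set Implicit Arguments. Unset Strict Implicit. Unset Printing Implicit Defensive.
Import Order.TTheory GRing.Theory Num.Theory.
Local Open Scope ring_scope.

Definition zsum (a b : int) (s : int -> int) : int :=
  \sum_(t < (if a <= b then `|(b - a + 1)%R|%N else 0%N)) s (a + t%:Z).

(* The k x k matrix built from a two-sided sequence s, following the paper's
   entry formulas with 1-based indices i_p = i+1, j_p = j+1:
     (M)_{i_p,1}   = s (k + n - i_p)
     (M)_{i_p,j_p} = \sum_{m = n - i_p + j_p - 1}^{k + n - i_p - 1} s m   (j_p >= 2).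
   With s = f_k this is Q_k^n; with s = l_k it is L_k^{(n)}. *)
Definition genmat (k : nat) (s : int -> int) (n : int) : 'M[int]_k :=
  \matrix_(i < k, j < k)
    (if (j : nat) == 0%N then s (k%:Z + n - (i%:Z + 1))
     else zsum (n - (i%:Z + 1) + (j%:Z + 1) - 1) (k%:Z + n - (i%:Z + 1) - 1) s).

(* Main.v *)
Require Import Defs.
From mathcomp Require Import all_boot all_order all_algebra.
From mathcomp Require Import zify ring.
Import Order.TTheory GRing.Theory Num.Theory.
Local Open Scope ring_scope.
Set Implicit Arguments. Unset Strict Implicit.

Lemma zsumE (a : int) (n : nat) (s : int -> int) :
  zsum a (a + n%:Z - 1) s = \sum_(t < n) s (a + t%:Z).
Proof.
rewrite /zsum; case: n => [|n].
  by have -> : (a <= a + 0%:Z - 1) = false by lia; rewrite big_ord0.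
have -> : (a <= a + n.+1%:Z - 1) = true by lia.
by have -> : a + n.+1%:Z - 1 - a + 1 = n.+1%:Z by lia.
Qed.

Definition Qm K : 'M[int]_K.+1 := \matrix_(i, j)
  ((if val i == 0%N then 1 else 0) + (if val i == (val j).+1 then 1 else 0)).

Lemma sum_ind (G : nat -> int) p n :
  \sum_(m < n) G m * (if (m:nat) == p then 1 else 0) = if (p < n)%N then G p else 0.
Proof.
elim: n => [|n IH]; first by rewrite big_ord0.
rewrite big_ord_recr /= IH.
case: (ltngtP p n) => h.
- by rewrite ltnS ltnW // mulr0 addr0.
- by rewrite ltnS leqNgt h mulr0 addr0.
- by subst; rewrite ltnSn mulr1 add0r.
Qed.

Lemma mulQl K (A : 'M[int]_K.+1) i j :
  (Qm K *m A) i j = if (i:nat) == 0%N then \sum_m A m j else A (inord (i:nat).-1) j.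
Proof.
rewrite mxE; case: i => [[|i] Hi] /=.
  by apply: eq_bigr => m _; rewrite mxE /= addr0 mul1r.
rewrite (eq_bigr (fun m : 'I_K.+1 => A (inord m) j * (if (m:nat) == i then 1 else 0))).
  by rewrite (sum_ind (fun m => A (inord m) j)); have -> : (i < K.+1)%N by lia.
move=> m _; rewrite mxE /= add0r inord_val mulrC; congr (_ * _).
by rewrite eqSS eq_sym.
Qed.

Lemma mulQr K (A : 'M[int]_K.+1) i j :
  (A *m Qm K) i j = A i 0 + (if ((j:nat).+1 < K.+1)%N then A i (inord (j:nat).+1) else 0).
Proof.
rewrite mxE.
under eq_bigr do rewrite mxE mulrDr.
rewrite big_split /=.
rewrite (eq_bigr (fun m : 'I_K.+1 => A i (inord m) * (if (m:nat) == 0%N then 1 else 0)));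
  last by move=> m _; rewrite inord_val.
rewrite (sum_ind (fun m => A i (inord m))) /=.
rewrite (eq_bigr (fun m : 'I_K.+1 => A i (inord m) * (if (m:nat) == (val j).+1 then 1 else 0)));
  last by move=> m _; rewrite inord_val.
rewrite (sum_ind (fun m => A i (inord m))); congr (A i _ + _).
by apply: val_inj; rewrite /= inordK.
Qed.

Definition E k (s : int -> int) (n : int) (i j : nat) : int :=
  \sum_(t < k - j) s (n - i%:Z + j%:Z - 1 + t%:Z).

Definition recs k (s : int -> int) := forall m : int, s (m + k%:Z) = zsum m (m + k%:Z - 1) s.

Lemma recE k s : recs k s -> forall m, s (m + k%:Z) = \sum_(t < k) s (m + t%:Z).
Proof. by move=> h m; rewrite h zsumE. Qed.

Lemma genmat_E k s n (i j : 'I_k) : recs k s -> genmat k s n i j = E k s n i j.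
Proof.
move=> hs; rewrite mxE /E; case: eqP => [j0|jn0].
  rewrite j0 subn0 (_ : k%:Z + n - (i%:Z+1) = (n - i%:Z - 1) + k%:Z); last by ring.
  rewrite recE //; apply: eq_bigr => t _; congr s; lia.
rewrite (_ : n - (i%:Z+1) + (j%:Z+1) - 1 = n - i%:Z + j%:Z - 1); last by ring.
rewrite (_ : k%:Z + n - (i%:Z+1) - 1 = (n - i%:Z + j%:Z - 1) + (k - j)%N%:Z - 1).
  by rewrite zsumE.
by have := ltn_ord j; lia.
Qed.
Lemma stepL K s n : recs K.+1 s ->
  genmat K.+1 s (n + 1) = Qm K *m genmat K.+1 s n.
Proof.
move=> hs; apply/matrixP => i j; rewrite mulQl !genmat_E //.
case: ifP => [/eqP i0 | i0].
  rewrite (eq_bigr (fun m : 'I_K.+1 => E K.+1 s n m j)); last by move=> m _; rewrite genmat_E.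
  rewrite /E exchange_big /=; apply: eq_bigr => t _.
  rewrite (reindex_inj rev_ord_inj) /=.
  rewrite (_ : n + 1 - i%:Z + j%:Z - 1 + t%:Z = (n + j%:Z + t%:Z - K.+1%:Z) + K.+1%:Z); last by rewrite i0; lia.
  rewrite recE //; apply: eq_bigr => m _; congr s.
  by have := ltn_ord m; lia.
have ip : (0 < i)%N by rewrite lt0n i0.
rewrite /E inordK; last exact: leq_ltn_trans (leq_pred _) (ltn_ord i).
have -> : (i.-1)%:Z = i%:Z - 1 by move: ip; case: (nat_of_ord i) => // m _; rewrite /= -addn1 PoszD addrK.
by apply: eq_bigr => t _; congr s; lia.
Qed.

Lemma stepR K s n : recs K.+1 s ->
  genmat K.+1 s (n + 1) = genmat K.+1 s n *m Qm K.
Proof.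
move=> hs; apply/matrixP => i j; rewrite mulQr !genmat_E //.
have h0 : E K.+1 s n i (@ord0 K) = s (n - i%:Z + K%:Z).
  rewrite /E subn0 (_ : n - i%:Z + K%:Z = (n - i%:Z - 1) + K.+1%:Z); last by lia.
  by rewrite recE //; apply: eq_bigr => t _; congr s; rewrite /=; lia.
rewrite h0 /E.
have hj := ltn_ord j.
rewrite subSn // big_ord_recr /= addrC.
congr (_ + _); first by congr s; lia.
case: ifP => hj2.
  rewrite /E inordK //= subSS.
  by apply: eq_bigr => t _; congr s; lia.
have -> : (K - j = 0)%N by lia.
by rewrite big_ord0.
Qed.

Lemma cancelL K (A B : 'M[int]_K.+1) : Qm K *m A = Qm K *m B -> A = B.
Proof.
move=> h; apply/matrixP => i j.
have hr : forall i' : 'I_K.+1, (i' < K)%N -> A i' j = B i' j.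
  move=> i' lt; have := congr1 (fun M : 'M[int]_K.+1 => M (inord i'.+1) j) h.
  by rewrite /= !mulQl inordK //= inord_val.
case: (ltnP i K) => hi; first exact: hr.
have := congr1 (fun M : 'M[int]_K.+1 => M ord0 j) h; rewrite /= !mulQl /= !big_ord_recr /=.
rewrite (eq_bigr (fun m => B (widen_ord (leqnSn K) m) j)); last by move=> m _; apply: hr; rewrite /= ltn_ord.
move/addrI.
have -> : i = ord_max by apply/val_inj => /=; have := ltn_ord i; lia.
done.
Qed.

Lemma cancelR K (A B : 'M[int]_K.+1) : A *m Qm K = B *m Qm K -> A = B.
Proof.
move=> h.
have h0 : forall i, A i 0 = B i 0.
  move=> i; have := congr1 (fun M : 'M[int]_K.+1 => M i ord_max) h.
  by rewrite /= !mulQr /= ltnn !addr0.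
apply/matrixP => i [[|j] hj].
  by rewrite (_ : Ordinal hj = 0) //; apply: val_inj.
have := congr1 (fun M : 'M[int]_K.+1 => M i (inord j)) h.
rewrite /= !mulQr inordK; last by lia.
rewrite hj h0 => /addrI.
by rewrite (_ : inord j.+1 = Ordinal hj) //; apply: val_inj; rewrite /= inordK.
Qed.
Lemma Psum K (f : int -> int) (p : nat) :
  (forall r : nat, (r < K)%N -> f r%:Z = 0) -> f K%:Z = 1 -> recs K.+1 f ->
  (0 < p)%N -> (p <= K.+1)%N ->
  \sum_(t < p) f (- p%:Z + t%:Z) = (p == 1%N)%:R.
Proof.
move=> hf0 hf1 hf hp1 hp2.
have hz : \sum_(p <= t < K.+1) f (- p%:Z + t%:Z) = 0.
  rewrite big_nat_cond big1 // => t /andP[/andP[h1 h2] _].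
  rewrite (_ : - p%:Z + t%:Z = (t - p)%N%:Z); last by lia.
  by apply: hf0; lia.
have h := recE hf (- p%:Z).
rewrite -(big_mkord xpredT (fun t => f (- p%:Z + t%:Z))) (big_cat_nat (n:=p)) //= in h.
rewrite hz addr0 big_mkord in h.
rewrite -h.
rewrite (_ : - p%:Z + K.+1%:Z = (K.+1 - p)%N%:Z); last by lia.
case: (p =P 1%N) => [->|hp]; first by rewrite subSS subn0 hf1.
by apply: hf0; lia.
Qed.

Lemma Mf0 K (f : int -> int) :
  (forall r : nat, (r < K)%N -> f r%:Z = 0) -> f K%:Z = 1 -> recs K.+1 f ->
  genmat K.+1 f 0 = 1%:M.
Proof.
move=> hf0 hf1 hf; apply/matrixP => i j; rewrite genmat_E // !mxE /E.
have hi := ltn_ord i; have hj := ltn_ord j.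
case: (ltnP i j) => hij.
  have -> : (i == j) = false by apply/negbTE; rewrite -val_eqE /=; lia.
  apply: big1 => t _; have ht := ltn_ord t.
  rewrite (_ : 0 - i%:Z + j%:Z - 1 + t%:Z = (j - i - 1 + t)%N%:Z); last by lia.
  by apply: hf0; lia.
rewrite -(big_mkord xpredT (fun t => f (0 - i%:Z + j%:Z - 1 + t%:Z))).
rewrite (big_cat_nat (n:=(i.+1 - j)%N)) //=; last by lia.
rewrite [X in _ + X]big_nat_cond [X in _ + X]big1 ?addr0; last first.
  move=> t /andP[/andP[h1 h2] _].
  rewrite (_ : 0 - i%:Z + j%:Z - 1 + t%:Z = (t - (i.+1 - j))%N%:Z); last by lia.
  by apply: hf0; lia.
rewrite big_mkord.
rewrite (eq_bigr (fun t : 'I_(i.+1 - j) => f (- (i.+1 - j)%N%:Z + t%:Z))); last first.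
  by move=> t _; congr f; lia.
rewrite (@Psum K f (i.+1 - j)%N hf0 hf1 hf); try lia.
congr (_ %:R); rewrite -val_eqE /=; apply/eqP/eqP; lia.
Qed.

Theorem theorem2 (k : nat) (f l : int -> int) (n : int) :
  (1 < k)%N ->
  (* f = f_k : generalized Fibonacci sequence of order k *)
  (forall r : nat, (r < k.-1)%N -> f r%:Z = 0) ->
  f (k.-1)%:Z = 1 ->
  (forall m : int, f (m + k%:Z) = zsum m (m + k%:Z - 1) f) ->
  (* l = l_k : generalized Lucas sequence of order k *)
  (forall m : int, l (m + k%:Z) = zsum m (m + k%:Z - 1) l) ->
  (forall r : nat, (r < k)%N -> l r%:Z = \tr (genmat k f r%:Z)) ->
  genmat k l n = genmat k f n *m genmat k l 0 /\
  genmat k l n = genmat k l 0 *m genmat k f n.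
Proof.
case: k => [//|K] _ hf0 hf1 hf hl _.
have I0 := Mf0 hf0 hf1 hf.
pose P (n : int) := genmat K.+1 l n = genmat K.+1 f n *m genmat K.+1 l 0 /\
  genmat K.+1 l n = genmat K.+1 l 0 *m genmat K.+1 f n.
have P0 : P 0 by rewrite /P I0 mul1mx mulmx1.
have up : forall n, P n -> P (n + 1).
  move=> m [h1 h2]; split.
    by rewrite (stepL _ hl) h1 mulmxA -(stepL _ hf).
  by rewrite (stepR _ hl) h2 -mulmxA -(stepR _ hf).
have down : forall n, P (n + 1) -> P n.
  move=> m [h1 h2]; split.
    by apply: (@cancelL K); rewrite -(stepL _ hl) h1 mulmxA -(stepL _ hf).
  by apply: (@cancelR K); rewrite -(stepR _ hl) h2 -mulmxA -(stepR _ hf).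
have pos : forall m : nat, P m%:Z.
  elim=> [//|m IH]; rewrite -addn1 PoszD; exact: up.
have neg : forall m : nat, P (- m%:Z).
  elim=> [//|m IH]; apply: down; rewrite (_ : - m.+1%:Z + 1 = - m%:Z) //; lia.
case: n => m; first exact: pos.
by rewrite NegzE; exact: neg.
Qed.
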